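(* Let $r \geq 1$ be an integer. Call an $m \times n$ matrix $A$ with entries in $\{0,1\}$ a ''good'' group testing matrix if (1) for every $0$-$1$ vector $x \in \{0,1\}^n$ with at most $k=1$ nonzero entry, $x$ is uniquely determined by the Boolean test outcome vector $y \in \{0,1\}^m$ defined by $y_i = \max_{1 \le j \le n} A_{i,j} x_j$ (i.e. $y_i = 1$ if and only if some positive element $j$ has $A_{i,j}=1$), and (2) every row of $A$ contains at most $r$ entries equal to $1$. Then there exists a good group testing matrix with $m = r$ and $n = \frac{r(r+1)}{2}$, so that $\frac{n}{m} = \frac{r+1}{2}$. Moreover, there is no good group testing matrix of any dimension $m \times n$ with $\frac{n}{m} > \frac{r+1}{2}$.
   Context: Non-adaptive group testing: there are $n$ subjects and $m$ pooled tests, encoded by a $0$-$1$ pooling matrix $A$ with $A_{i,j}=1$ iff subject $j$'s sample is included in test $i$. A test is positive iff it contains at least one positive subject. ''Correctly infer the status of each of the $n$ elements whenever there is at most one positive element'' means the map from the set of status vectors with at most one positive entry to test outcome vectors is injective. The row constraint (at most $r$ ones per row) models the dilution constraint that at most $r$ samples can be pooled together. *)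

(* Defs.v *)
From mathcomp Require Import all_boot all_order all_algebra.
Set Implicit Arguments. Unset Strict Implicit. Unset Printing Implicit Defensive.

Definition weight n (x : {ffun 'I_n -> bool}) : nat := #|[set j | x j]|.

Definition outcome m n (A : 'M[bool]_(m, n)) (x : {ffun 'I_n -> bool})
  : {ffun 'I_m -> bool} := [ffun i => [exists j, A i j && x j]].

Definition identifies_one m n (A : 'M[bool]_(m, n)) : Prop :=
  forall x x' : {ffun 'I_n -> bool},
    weight x <= 1 -> weight x' <= 1 -> outcome A x = outcome A x' -> x = x'.

Definition row_bounded r m n (A : 'M[bool]_(m, n)) : Prop :=
  forall i : 'I_m, #|[set j | A i j]| <= r.

Definition good r m n (A : 'M[bool]_(m, n)) : Prop :=
  identifies_one A /\ row_bounded r A.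

(* Main.v *)
Require Import Defs.
From mathcomp Require Import all_boot all_order all_algebra.
From mathcomp Require Import zify.

Definition ej {n} (j : 'I_n) : {ffun 'I_n -> bool} := [ffun k => k == j].

Lemma weight_ej n (j : 'I_n) : weight (ej j) <= 1.
Proof.
rewrite /weight (_ : [set k | ej j k] = [set j]) ?cards1 //.
by apply/setP => k; rewrite !inE ffunE.
Qed.

Lemma weight_0 n : weight ([ffun _ => false] : {ffun 'I_n -> bool}) <= 1.
Proof.
rewrite /weight (_ : [set k | _] = set0) ?cards0 //.
by apply/setP => k; rewrite !inE ffunE.
Qed.

Lemma outcome_ej m n (A : 'M[bool]_(m, n)) j i : outcome A (ej j) i = A i j.
Proof.
rewrite ffunE; apply/existsP/idP => [[k /andP[h]]|h].
  by rewrite ffunE => /eqP <-.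
by exists j; rewrite h ffunE eqxx.
Qed.

Lemma outcome_0 m n (A : 'M[bool]_(m, n)) i : outcome A [ffun _ => false] i = false.
Proof. by rewrite ffunE; apply/existsP => -[k]; rewrite ffunE andbF. Qed.

Lemma weight_dec n (x : {ffun 'I_n -> bool}) : weight x <= 1 ->
  x = [ffun _ => false] \/ exists j, x = ej j.
Proof.
move=> w; case: (pickP x) => [j xj | none].
  right; exists j; apply/ffunP => k; rewrite ffunE.
  case: eqP => [->//|nk]; apply/negbTE/negP => xk.
  have : #|[set j; k]| <= weight x.
    by apply: subset_leq_card; apply/subsetP => z; rewrite !inE => /orP[]/eqP->.
  rewrite cards2; case: eqP => [jk|_]; first by rewrite jk in nk.
  by move=> h; have := leq_trans h w.
by left; apply/ffunP => k; rewrite ffunE none.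
Qed.

Lemma ident_iff m n (A : 'M[bool]_(m, n)) :
  identifies_one A <-> ((forall j j', (forall i, A i j = A i j') -> j = j') /\
                        (forall j, exists i, A i j)).
Proof.
split.
  move=> H; split.
    move=> j j' hc; have E : ej j = ej j'.
      apply: H; rewrite ?weight_ej //.
      by apply/ffunP => i; rewrite !outcome_ej.
    by have := congr1 (fun f : {ffun _ -> bool} => f j) E; rewrite !ffunE eqxx => /esym/eqP.
  move=> j; case: (boolP [exists i, A i j]) => [/existsP//|/existsPn nz].
  have E : ej j = [ffun _ => false].
    apply: H; rewrite ?weight_ej ?weight_0 //.
    by apply/ffunP => i; rewrite outcome_ej outcome_0; apply/negbTE.
  by have := congr1 (fun f : {ffun _ -> bool} => f j) E; rewrite !ffunE eqxx.
move=> [inj nz] x x' w w' E.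
have col : forall j j', outcome A (ej j) = outcome A (ej j') -> j = j'.
  by move=> j j' E'; apply: inj => i; rewrite -!outcome_ej E'.
have nz0 : forall j, outcome A (ej j) <> outcome A [ffun _ => false].
  move=> j E'; have [i hi] := nz j.
  by have := congr1 (fun f : {ffun _ -> bool} => f i) E'; rewrite outcome_ej outcome_0 hi.
case: (@weight_dec _ _ w) E => [->|[j ->]]; case: (@weight_dec _ _ w') => [->|[j' ->]] //.
- by move=> E; have := nz0 _ (esym E).
- by move=> E; have := nz0 _ E.
by move=> /col ->.
Qed.

Lemma card_sum (T : finType) (P : pred T) : #|[set x | P x]| = \sum_x (P x : nat).
Proof.
rewrite -sum1_card big_mkcond /=; apply: eq_bigr => x _; rewrite inE; by case: (P x).
Qed.

Lemma part2 r m n (A : 'M[bool]_(m, n)) : good r A -> 2 * n <= (r + 1) * m.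
Proof.
move=> [/ident_iff [inj nz] rb].
pose ones (j : 'I_n) := [set i | A i j].
pose J1 := [set j | #|ones j| == 1].
have oinj : injective ones.
  move=> j j' E; apply: inj => i.
  by have := congr1 (fun s : {set _} => i \in s) E; rewrite /ones !inE.
have cJ1 : #|J1| <= m.
  rewrite -(card_imset J1 oinj).
  apply: leq_trans (_ : #|[set s : {set 'I_m} | #|s| == 1]| <= _).
    apply: subset_leq_card; apply/subsetP => s /imsetP [j]; rewrite inE => h ->.
    by rewrite inE.
  by rewrite card_draws card_ord bin1.
have c1 : 2 * n <= \sum_j #|ones j| + #|J1|.
  rewrite -sum1_card [\sum_(i in J1) 1]big_mkcond /= -big_split /=.
  rewrite -[n in 2 * n]card_ord -sum1_card big_distrr /=.
  apply: leq_sum => j _; rewrite muln1 inE.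
  have [i hi] := nz j.
  have : 0 < #|ones j| by apply/card_gt0P; exists i; rewrite inE.
  case: eqP => [-> //| h1 h2]; rewrite addn0 ltn_neqAle eq_sym; apply/andP; split; [apply/eqP|]; done.
have c2 : \sum_j #|ones j| = \sum_i #|[set j | A i j]|.
  rewrite /ones; under eq_bigr do rewrite card_sum.
  rewrite exchange_big /=; apply: eq_bigr => i _; by rewrite card_sum.
have c3 : \sum_i #|[set j | A i j]| <= \sum_(i < m) r by apply: leq_sum => i _; apply: rb.
rewrite sum_nat_const card_ord in c3.
lia.
Qed.

Section C.
Variable r : nat.
Definition SS := [set s : {set 'I_r} | (0 < #|s|) && (#|s| <= 2)].

Lemma cardSS : #|SS| = r * (r + 1) %/ 2.
Proof.
have -> : SS = [set s : {set 'I_r} | #|s| == 1] :|: [set s : {set 'I_r} | #|s| == 2].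
  by apply/setP => s; rewrite !inE; case: #|s| => [|[|[|k]]].
rewrite cardsU (_ : _ :&: _ = set0) ?cards0 ?subn0; last first.
  by apply/setP => s; rewrite !inE; case: eqP => // ->.
rewrite !card_draws card_ord bin1.
have := bin2 r.+1; rewrite binS bin1 /= addnC => ->.
by rewrite divn2 addn1 mulnC.
Qed.

Definition col (j : 'I_(r * (r + 1) %/ 2)) : {set 'I_r} :=
  enum_val (cast_ord (esym cardSS) j).

Lemma colS j : col j \in SS.
Proof. exact: enum_valP. Qed.

Lemma col_inj : injective col.
Proof. by move=> j j' /enum_val_inj /cast_ord_inj. Qed.

Definition AA : 'M[bool]_(r, r * (r + 1) %/ 2) := \matrix_(i, j) (i \in col j).

Lemma rowb (i : 'I_r) : #|[set s in SS | i \in s]| <= r.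
Proof.
pose g (s : {set 'I_r}) := odflt i [pick k in s :\ i].
have h : forall s, s \in [set s in SS | i \in s] ->
    s :\ i = (if g s == i then set0 else [set g s]).
  move=> s; rewrite !inE => /andP[/andP[_ s2] iS].
  have c1 : #|s :\ i| <= 1 by move: s2; rewrite (cardsD1 i s) iS add1n ltnS.
  rewrite /g; case: pickP => [k kin | none] /=.
    have ki : k != i by move: kin; rewrite !inE => /andP[].
    rewrite (negbTE ki); apply/eqP; rewrite eq_sym eqEcard sub1set kin cards1 //.
  by rewrite eqxx; apply/setP => k; rewrite in_set0; apply: none.
have ginj : {in [set s in SS | i \in s] &, injective g}.
  move=> s s' hs hs' E.
  have := hs; have := hs'; rewrite !inE => /andP[_ iS'] /andP[_ iS].
  by rewrite -(setD1K iS) -(setD1K iS') (h _ hs) (h _ hs') E.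
rewrite -(card_in_imset ginj).
by apply: leq_trans (max_card _) _; rewrite card_ord.
Qed.

Lemma goodAA : good r AA.
Proof.
split.
  apply/ident_iff; split.
    move=> j j' H; apply: col_inj; apply/setP => i.
    by have := H i; rewrite !mxE.
  move=> j; have := colS j; rewrite inE => /andP[/card_gt0P [i hi] _].
  by exists i; rewrite mxE.
move=> i; apply: leq_trans (rowb i).
rewrite -(card_imset _ col_inj); apply: subset_leq_card.
apply/subsetP => s /imsetP [j]; rewrite inE mxE => h ->.
by rewrite inE colS.
Qed.
End C.

Theorem mainTheorem1 (r : nat) (hr : 1 <= r) :
  (exists A : 'M[bool]_(r, r * (r + 1) %/ 2), good r A) /\
  (forall (m n : nat) (A : 'M[bool]_(m, n)), good r A -> ~ ((r + 1) * m < 2 * n)).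
Proof.
split; first by exists (AA r); apply: goodAA.
move=> m n A /part2 h; rewrite ltnNge h //.
Qed.
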